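(* For all integers $k\ge\ell\ge0$, $F_{k,\ell}$ equals the $(\widetilde I_0,I_0)$ entry of the matrix $\widetilde{\mathbf T}^{\ell}\,\mathbf U\,\mathbf T^{k-\ell}$, where $I_0=[0,a-1]$ and $\widetilde I_0=[0,a-2]$ (the empty set if $a=1$). In particular $F_{k,0}=F_k$.
   Context: Let $S$ be a finite set of integers with $a:=\max S\ge 1$ and $b:=-\min S\ge 1$. Each $s\in S$ carries a weight $\omega_s$ in a field $K$ of characteristic $0$; set $\omega_s:=0$ for $s\in\mathbb Z\setminus S$, and for $s\in\mathbb Z$ put $\beta_s:=\delta_{s,0}-\omega_s$ and $\widetilde\beta_s:=-\beta_{s+1}$. For $k\ge0$, $A_k$ is the $(k+1)\times(k+1)$ matrix with rows and columns indexed by $0,\dots,k$ whose $(i,j)$ entry is $\omega_{j-i}$. Put $F_0:=1$ and $F_k:=\det(1-A_{k-1})$ for $k\ge1$. For $0\le\ell\le k$, $F_{k,\ell}$ is the $(\ell,0)$ cofactor of $1-A_k$, i.e. $(-1)^\ell$ times the determinant of the matrix obtained from $1-A_k$ by deleting row $\ell$ and column $0$. Notation: $[m,n]:=\{i\in\mathbb Z: m\le i\le n\}$, $X+c:=\{x+c:x\in X\}$; an $n$-subset is a subset of cardinality $n$. For a finite set $I\subseteq\mathbb Z$ and $s\in\mathbb Z$, $\epsilon_s(I):=(-1)^{\#\{i\in I:\ i<s\}}$. $\mathbf T$ is the square matrix with rows and columns indexed by the $a$-subsets of $[-b,a-1]$ and entries $\mathbf T[I,J]:=\epsilon_s(I)\beta_s$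 if there is an integer $s$ with $I\cup\{a\}=(J+1)\cup\{s\}$ (such $s$ is then unique), and $0$ otherwise. $\widetilde{\mathbf T}$ is the square matrix indexed by the $(a-1)$-subsets of $[-b-1,a-2]$ with $\widetilde{\mathbf T}[I,J]:=\epsilon_s(I)\widetilde\beta_s$ if there is an integer $s$ with $I\cup\{a-1\}=(J+1)\cup\{s\}$, and $0$ otherwise. $\mathbf U$ is the matrix with rows indexed by the $(a-1)$-subsets of $[-b-1,a-2]$ and columns by the $a$-subsets of $[-b,a-1]$, with $\mathbf U[I,J]=1$ if $I\cup\{a-1\}=J$ and $0$ otherwise. *)

(* Defs.v *)
From HB Require Import structures.
From mathcomp Require Import all_boot all_order all_algebra.
Set Implicit Arguments. Unset Strict Implicit. Unset Printing Implicit Defensive.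
Import Order.TTheory GRing.Theory Num.Theory.
Local Open Scope ring_scope.

Definition Amx (K : fieldType) (w : int -> K) (k : nat) : 'M[K]_(k.+1) :=
  \matrix_(i < k.+1, j < k.+1) w (j%:Z - i%:Z).

Definition Fk (K : fieldType) (w : int -> K) (k : nat) : K :=
  match k with 0%N => 1 | k'.+1 => \det (1%:M - Amx w k') end.

(* F_{k,l} = (l,0) cofactor of 1 - A_k (mathcomp's cofactor includes the
   sign (-1)^(l+0)). Meaningful for l <= k. *)
Definition Fkl (K : fieldType) (w : int -> K) (k l : nat) : K :=
  cofactor (1%:M - Amx w k) (inord l) ord0.

Definition beta (K : fieldType) (w : int -> K) (s : int) : K :=
  (s == 0)%:R - w s.
Definition betat (K : fieldType) (w : int -> K) (s : int) : K :=
  - beta w (s + 1).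

(* ---------- Subset side ----------
   All integer sets involved live in the window U = [-b-2, a+1].
   An integer x in U is encoded by the ordinal k : 'I_(a+b+4) with
   x = k - (b+2). A finite set of integers contained in U is encoded as a
   {set 'I_(a+b+4)}. *)
Definition Usz (a b : nat) : nat := (a + b + 3).+1.
Definition dec (a b : nat) (k : 'I_(Usz a b)) : int := (k : nat)%:Z - (b + 2)%:Z.

Definition enc_a (a b : nat) : 'I_(Usz a b) := inord (a + b + 2).
Definition enc_a1 (a b : nat) : 'I_(Usz a b) := inord (a + b + 1).

Definition shift1 (a b : nat) (J : {set 'I_(Usz a b)}) : {set 'I_(Usz a b)} :=
  [set k : 'I_(Usz a b) | [exists j in J, (k : nat) == (j : nat).+1]].

Definition eps (K : fieldType) (a b : nat) (I : {set 'I_(Usz a b)})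
  (k : 'I_(Usz a b)) : K := (-1) ^+ #|[set i in I | (i < k)%N]|.

Definition within (a b : nat) (lo hi : int) (I : {set 'I_(Usz a b)}) : bool :=
  [forall k in I, (lo <= dec k) && (dec k <= hi)].

Definition Tidx (a b : nat) (I : {set 'I_(Usz a b)}) : bool :=
  (#|I| == a) && within (- b%:Z) (a%:Z - 1) I.
Definition Ttidx (a b : nat) (I : {set 'I_(Usz a b)}) : bool :=
  (#|I| == a.-1) && within (- b%:Z - 1) (a%:Z - 2) I.

Definition smx (K : fieldType) (a b : nat) :=
  {set 'I_(Usz a b)} -> {set 'I_(Usz a b)} -> K.

(* T[I,J] = eps_s(I) beta_s if I u {a} = (J+1) u {s}, else 0.
   (Any such s lies in I u {a}, hence in the window.) *)
Definition Tmx (K : fieldType) (a b : nat) (w : int -> K) : smx K a b :=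
  fun I J =>
    if [pick k : 'I_(Usz a b) | (I :|: [set enc_a a b]) == (shift1 J :|: [set k])]
      is Some k then eps K I k * beta w (dec k) else 0.

Definition Ttmx (K : fieldType) (a b : nat) (w : int -> K) : smx K a b :=
  fun I J =>
    if [pick k : 'I_(Usz a b) | (I :|: [set enc_a1 a b]) == (shift1 J :|: [set k])]
      is Some k then eps K I k * betat w (dec k) else 0.

Definition Umx (K : fieldType) (a b : nat) : smx K a b :=
  fun I J => ((I :|: [set enc_a1 a b]) == J)%:R.

Definition smul (K : fieldType) (a b : nat) (P : pred {set 'I_(Usz a b)})
  (X Y : smx K a b) : smx K a b :=
  fun I J => \sum_(L : {set 'I_(Usz a b)} | P L) X I L * Y L J.

Definition sid (K : fieldType) (a b : nat) : smx K a b := fun I J => (I == J)%:R.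

Definition spow (K : fieldType) (a b : nat) (P : pred {set 'I_(Usz a b)})
  (X : smx K a b) (n : nat) : smx K a b :=
  iter n (fun Y => smul P Y X) (@sid K a b).

Definition I0 (a b : nat) : {set 'I_(Usz a b)} :=
  [set k | (0 <= dec k) && (dec k <= a%:Z - 1)].
Definition It0 (a b : nat) : {set 'I_(Usz a b)} :=
  [set k | (0 <= dec k) && (dec k <= a%:Z - 2)].

(* Main.v *)
Require Import Defs.
From HB Require Import structures.
From mathcomp Require Import all_boot all_order all_algebra zify ring lra.
Set Implicit Arguments. Unset Strict Implicit. Unset Printing Implicit Defensive.
Import Order.TTheory GRing.Theory Num.Theory.
Local Open Scope ring_scope.

Definition rngZ (lo : int) (N : nat) : seq int := [seq lo + i%:Z | i <- iota 0 N].

Lemma mem_rngZ lo N x : (x \in rngZ lo N) = (lo <= x) && (x < lo + N%:Z).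
Proof.
apply/mapP/idP.
  by case=> i; rewrite mem_iota add0n => /andP[_ hi] ->; lia.
move=> /andP[h1 h2]; exists `|x - lo|%N.
  rewrite mem_iota add0n; lia.
lia.
Qed.

Lemma rngZ_uniq lo N : uniq (rngZ lo N).
Proof.
rewrite map_inj_uniq ?iota_uniq // => i j /= h; lia.
Qed.

Lemma rngZ_sorted lo N : sorted <%R (rngZ lo N).
Proof.
apply: homo_sorted (iota_ltn_sorted 0 N) => i j /= h; lia.
Qed.

Lemma size_rngZ lo N : size (rngZ lo N) = N.
Proof. by rewrite size_map size_iota. Qed.

Lemma rngZS lo N : rngZ lo N.+1 = lo :: rngZ (lo + 1) N.
Proof.
rewrite /rngZ /= addr0; congr (_ :: _).
rewrite -(addn0 1%N) iotaDl -map_comp; apply: eq_map => i /=; lia.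
Qed.

Lemma map_rngZ lo N c : map (fun x => x + c) (rngZ lo N) = rngZ (lo + c) N.
Proof. rewrite /rngZ -map_comp; apply: eq_map => i /=; lia. Qed.

Lemma map_filter_sh (p : pred int) (s : seq int) c :
  map (fun x => x + c) (filter p s) = filter (fun y => p (y - c)) (map (fun x => x + c) s).
Proof.
elim: s => //= x s IH; rewrite addrK; case: (p x) => //=; by rewrite IH.
Qed.

Definition G (K : fieldType) (h : nat -> int -> K) (m : nat) (s : seq int) : K :=
  if size s == m then \det (\matrix_(i < m, j < m) h i (nth 0 s j - i%:Z)) else 0.

Definition rem_at (j : nat) (s : seq int) := take j s ++ drop j.+1 s.

Lemma size_rem_at j s : (j < size s)%N -> size (rem_at j s) = (size s).-1.
Proof. move=> h; rewrite size_cat size_take size_drop h; lia. Qed.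

Lemma nth_rem_at j s j' : (j < size s)%N ->
  nth 0 (rem_at j s) j' = nth 0 s (if (j' < j)%N then j' else j'.+1).
Proof.
move=> h; rewrite nth_cat size_take h; case: ltnP => hj.
  by rewrite nth_take.
rewrite nth_drop; congr nth; lia.
Qed.

Lemma G_lap (K : fieldType) (h : nat -> int -> K) m s : size s = m.+1 ->
  G h m.+1 s = \sum_(j < m.+1) (-1)^+j * h 0%N (nth 0 s j) *
      G (fun i => h i.+1) m (map (fun x => x - 1) (rem_at j s)).
Proof.
move=> hs; rewrite /G hs eqxx (expand_det_row _ ord0); apply: eq_bigr => j _.
rewrite size_map size_rem_at hs ?ltn_ord // eqxx /cofactor mxE add0n subr0.
rewrite mulrA [h _ _ * _]mulrC; congr (_ * _).
congr (\det _); apply/matrixP => i k; rewrite !mxE (nth_map 0); last first.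
  by rewrite size_rem_at hs ?ltn_ord.
rewrite nth_rem_at ?hs ?ltn_ord //.
have -> : (lift j k : nat) = (if (k < j)%N then (k : nat) else k.+1).
  rewrite /= /bump; case: ltnP => hk; lia.
have -> : (lift ord0 i : nat) = i.+1 by [].
congr (h _ _); set t := nth _ _ _; rewrite -addn1 PoszD; ring.
Qed.

Lemma G_zero_col (K : fieldType) (h : nat -> int -> K) m s c :
  c \in s -> (forall i, h i (c - i%:Z) = 0) -> G h m s = 0.
Proof.
move=> cs hz; rewrite /G; case: eqP => // hs.
have hi : (index c s < m)%N by rewrite -hs index_mem.
rewrite (expand_det_col _ (Ordinal hi)) big1 // => i _.
by rewrite mxE /= nth_index // hz mul0r.
Qed.

Definition decS (a b : nat) (S : {set 'I_(Usz a b)}) (x : int) : bool :=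
  [exists k in S, dec k == x].

Lemma decE a b (k : 'I_(Usz a b)) : dec k = (k : nat)%:Z - (b + 2)%:Z.
Proof. by []. Qed.

Lemma dec_inj a b : injective (@dec a b).
Proof. move=> i j; rewrite !decE => h; apply: val_inj => /=; lia. Qed.

Lemma dec_ltE a b (i k : 'I_(Usz a b)) : (dec i < dec k) = (i < k)%N.
Proof. rewrite !decE; lia. Qed.

Lemma decSP a b (S : {set 'I_(Usz a b)}) x :
  reflect (exists2 k, k \in S & dec k = x) (decS S x).
Proof.
apply: (iffP existsP).
  by case=> k /andP[h1 /eqP h2]; exists k.
by case=> k h1 h2; exists k; rewrite h1 h2 eqxx.
Qed.

Lemma decS_U1 a b (S : {set 'I_(Usz a b)}) e x :
  decS (S :|: [set e]) x = decS S x || (x == dec e).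
Proof.
apply/decSP/orP.
  case=> k; rewrite !inE => /orP[hk|/eqP->] <-; first by left; apply/decSP; exists k.
  by right.
case=> [/decSP[k hk <-]|/eqP->]; first by exists k; rewrite // !inE hk.
by exists e; rewrite // !inE eqxx orbT.
Qed.

Lemma decS_D1 a b (S : {set 'I_(Usz a b)}) e x :
  decS (S :\ e) x = decS S x && (x != dec e).
Proof.
apply/decSP/andP.
  case=> k; rewrite !inE => /andP[hk2 hk1] <-; split; first by apply/decSP; exists k.
  by apply: contra hk2 => /eqP /dec_inj ->.
case=> /decSP[k hk <-] hne; exists k => //; rewrite !inE hk andbT.
by apply: contra hne => /eqP ->.
Qed.

Lemma decS_set0 a b x : decS (set0 : {set 'I_(Usz a b)}) x = false.
Proof. by apply/decSP; case=> k; rewrite inE. Qed.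

Definition unshift (a b : nat) (S : {set 'I_(Usz a b)}) : {set 'I_(Usz a b)} :=
  [set j : 'I_(Usz a b) | [exists x in S, (x : nat) == j.+1]].

Lemma decS_unshift a b (S : {set 'I_(Usz a b)}) y :
  (forall x, x \in S -> (0 < x)%N) -> decS (unshift S) y = decS S (y + 1).
Proof.
move=> hpos; apply/decSP/decSP.
  case=> j; rewrite inE => /existsP[x /andP[hx /eqP hxj]] <-; exists x => //.
  rewrite !decE hxj; lia.
case=> x hx hdec.
have hlt : (x.-1 < Usz a b)%N by apply: leq_ltn_trans (leq_pred _) (ltn_ord x).
exists (Ordinal hlt).
  rewrite inE; apply/existsP; exists x; rewrite hx /=; have := hpos x hx; lia.
move: hdec; rewrite !decE /=; have := hpos x hx; lia.
Qed.

Lemma mem_shift1 a b (J : {set 'I_(Usz a b)}) k :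
  (k \in shift1 J) = [exists j in J, (k : nat) == j.+1].
Proof. by rewrite inE. Qed.

Lemma shift1_unshift a b (S : {set 'I_(Usz a b)}) :
  (forall x, x \in S -> (0 < x)%N) -> shift1 (unshift S) = S.
Proof.
move=> hpos; apply/setP => k; rewrite mem_shift1; apply/existsP/idP.
  case=> j /andP[]; rewrite inE => /existsP[x /andP[hx /eqP hxj]] /eqP hkj.
  by have -> : k = x by apply: val_inj; rewrite /= hkj hxj.
move=> hk.
have hlt : (k.-1 < Usz a b)%N by apply: leq_ltn_trans (leq_pred _) (ltn_ord k).
exists (Ordinal hlt); rewrite inE /=; have := hpos k hk => hk0.
apply/andP; split; last by apply/eqP; lia.
apply/existsP; exists k; rewrite hk /=; apply/eqP; lia.
Qed.

Lemma unshift_shift1 a b (J : {set 'I_(Usz a b)}) :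
  (forall j, j \in J -> (j.+1 < Usz a b)%N) -> unshift (shift1 J) = J.
Proof.
move=> hlt; apply/setP => j; rewrite inE; apply/existsP/idP.
  case=> x /andP[]; rewrite mem_shift1 => /existsP[j' /andP[hj' /eqP h1]] /eqP h2.
  by have -> : j = j' by apply: val_inj; move: h1 h2 => /= -> [].
move=> hj; exists (Ordinal (hlt j hj)); rewrite mem_shift1 /= eqxx andbT.
by apply/existsP; exists j; rewrite hj /=.
Qed.

Lemma card_shift1 a b (J : {set 'I_(Usz a b)}) :
  (forall j, j \in J -> (j.+1 < Usz a b)%N) -> #|shift1 J| = #|J|.
Proof.
move=> hlt.
have -> : shift1 J = (fun j : 'I_(Usz a b) => (inord j.+1 : 'I_(Usz a b))) @: J.
  apply/setP => k; rewrite mem_shift1; apply/existsP/imsetP.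
    case=> j /andP[hj /eqP hk]; exists j => //; apply: val_inj.
    by rewrite /= inordK ?hk ?hlt.
  case=> j hj ->; exists j; rewrite hj /= inordK ?hlt //.
rewrite card_in_imset // => i j hi hj /(congr1 val) /=.
rewrite !inordK ?hlt // => -[h]; exact: val_inj.
Qed.

Lemma card_dec a b (S : {set 'I_(Usz a b)}) (L : seq int) :
  uniq L -> (forall x, (x \in L) = decS S x) -> #|S| = size L.
Proof.
move=> uL hL.
have hp : perm_eq (map (@dec a b) (enum S)) L.
  apply: uniq_perm => //; first by rewrite map_inj_uniq ?enum_uniq //; exact: dec_inj.
  move=> x; rewrite hL; apply/mapP/decSP.
    by case=> k; rewrite mem_enum => hk ->; exists k.
  by case=> k hk <-; exists k; rewrite ?mem_enum.
by rewrite -(perm_size hp) size_map cardE.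
Qed.

Definition stP (a b A B : nat) (J : {set 'I_(Usz a b)}) : bool :=
  (#|J| == A) && within (- B%:Z) (A%:Z - 1) J.

Definition Xmx (K : fieldType) (a b : nat) (ea : 'I_(Usz a b)) (g : int -> K) : smx K a b :=
  fun I J =>
    if [pick k : 'I_(Usz a b) | (I :|: [set ea]) == (shift1 J :|: [set k])]
      is Some k then eps K I k * g (dec k) else 0.

Definition Jk (a b : nat) (I : {set 'I_(Usz a b)}) (ea k : 'I_(Usz a b)) :=
  unshift ((I :|: [set ea]) :\ k).

Lemma withinP a b lo hi (J : {set 'I_(Usz a b)}) :
  reflect (forall y, decS J y -> lo <= y <= hi) (within lo hi J).
Proof.
apply: (iffP forall_inP).
  by move=> h y /decSP[k hk <-]; apply: h.
by move=> h k hk; apply: h; apply/decSP; exists k.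
Qed.

Definition hyps (a b A B : nat) (ea : 'I_(Usz a b)) : Prop :=
  [/\ (A <= a)%N, (B <= b.+1)%N, (1 <= B)%N & dec ea = A%:Z].

Lemma stP_dec a b A B (J : {set 'I_(Usz a b)}) y :
  stP A B J -> decS J y -> - B%:Z <= y <= A%:Z - 1.
Proof. by case/andP=> _ /withinP h; apply: h. Qed.

Lemma decS_Uea a b A B (ea : 'I_(Usz a b)) (I : {set 'I_(Usz a b)}) y :
  hyps A B ea -> stP A B I -> decS (I :|: [set ea]) y -> - B%:Z <= y <= A%:Z.
Proof.
case=> hA hB hB1 hea hI; rewrite decS_U1 hea => /orP[/(stP_dec hI)|/eqP->]; lia.
Qed.

Lemma pos_Uea a b A B (ea : 'I_(Usz a b)) (I : {set 'I_(Usz a b)}) x :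
  hyps A B ea -> stP A B I -> x \in I :|: [set ea] -> (0 < x)%N.
Proof.
move=> hh hI hx; have : decS (I :|: [set ea]) (dec x) by apply/decSP; exists x.
move/(decS_Uea hh hI); case: hh => hA hB hB1 hea; rewrite decE; lia.
Qed.

Lemma lt_st a b A B (ea : 'I_(Usz a b)) (J : {set 'I_(Usz a b)}) j :
  hyps A B ea -> stP A B J -> j \in J -> (j.+1 < Usz a b)%N.
Proof.
move=> hh hJ hj; have : decS J (dec j) by apply/decSP; exists j.
move/(stP_dec hJ); case: hh => hA hB hB1 hea; rewrite decE /Usz; lia.
Qed.

Lemma ea_notin a b A B (ea : 'I_(Usz a b)) (I : {set 'I_(Usz a b)}) :
  hyps A B ea -> stP A B I -> ea \notin I.
Proof.
move=> hh hI; apply/negP => hx; have : decS I (dec ea) by apply/decSP; exists ea.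
move/(stP_dec hI); case: hh => hA hB hB1 ->; lia.
Qed.

Lemma card_Uea a b A B (ea : 'I_(Usz a b)) (I : {set 'I_(Usz a b)}) :
  hyps A B ea -> stP A B I -> #|I :|: [set ea]| = A.+1.
Proof.
move=> hh hI; rewrite setUC cardsU1 (ea_notin hh hI).
by case/andP: hI => /eqP -> _; rewrite add1n.
Qed.

Lemma shift1_Jk a b A B (ea : 'I_(Usz a b)) (I : {set 'I_(Usz a b)}) k :
  hyps A B ea -> stP A B I -> shift1 (Jk I ea k) = (I :|: [set ea]) :\ k.
Proof.
move=> hh hI; apply: shift1_unshift => x; rewrite inE => /andP[_ hx].
exact: pos_Uea hh hI hx.
Qed.

Lemma notin_shift a b A B (ea : 'I_(Usz a b)) (I J : {set 'I_(Usz a b)}) k :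
  hyps A B ea -> stP A B I -> stP A B J ->
  (I :|: [set ea]) = (shift1 J :|: [set k]) -> k \notin shift1 J.
Proof.
move=> hh hI hJ he; apply/negP => hk.
have := card_Uea hh hI; rewrite he.
have -> : shift1 J :|: [set k] = shift1 J.
  by apply/setP => x; rewrite in_setU in_set1; case: (x =P k) => [->|_]; rewrite ?hk ?orbT ?orbF.
rewrite card_shift1; last by move=> j; exact: lt_st hh hJ.
by case/andP: hJ => /eqP -> _; lia.
Qed.

Lemma Jk_cond a b A B (ea : 'I_(Usz a b)) (I J : {set 'I_(Usz a b)}) k :
  hyps A B ea -> stP A B I -> stP A B J -> k \in I :|: [set ea] ->
  (J == Jk I ea k) = ((I :|: [set ea]) == (shift1 J :|: [set k])).
Proof.
move=> hh hI hJ hk; apply/eqP/eqP.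
  move=> ->; rewrite (shift1_Jk _ hh hI) [RHS]setUC setD1K //.
move=> he; have hn := notin_shift hh hI hJ he.
rewrite /Jk he.
have -> : (shift1 J :|: [set k]) :\ k = shift1 J.
  apply/setP => x; rewrite in_setD1 in_setU in_set1.
  by case: (x =P k) => [->|_] /=; rewrite ?(negbTE hn) ?orbF.
by rewrite unshift_shift1 // => j; exact: lt_st hh hJ.
Qed.

Lemma stP_Jk a b A B (ea : 'I_(Usz a b)) (I : {set 'I_(Usz a b)}) k :
  hyps A B ea -> stP A B I -> k \in I :|: [set ea] ->
  stP A B (Jk I ea k) = ~~ decS ((I :|: [set ea]) :\ k) (- B%:Z).
Proof.
move=> hh hI hk.
have hc : #|Jk I ea k| = A.
  rewrite -card_shift1; last first.
    move=> j; rewrite inE => /existsP[x /andP[_ /eqP <-]]; exact: ltn_ord.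
  rewrite (shift1_Jk _ hh hI); have := cardsD1 k (I :|: [set ea]).
  by rewrite hk (card_Uea hh hI) add1n => -[].
have hpos : forall x, x \in (I :|: [set ea]) :\ k -> (0 < x)%N.
  by move=> x; rewrite inE => /andP[_]; exact: pos_Uea hh hI.
rewrite /stP hc eqxx /=; apply/withinP/idP.
  move=> hw; apply/negP => hd.
  have := hw (- B%:Z - 1); rewrite /Jk decS_unshift // subrK => /(_ hd); lia.
move=> hn y; rewrite /Jk decS_unshift //.
move=> hd; have := hd; rewrite decS_D1 => /andP[/(decS_Uea hh hI) hr _].
have : y + 1 != - B%:Z by apply: contraNneq hn => <-.
lia.
Qed.

Lemma Xmx_sum (K : fieldType) a b A B ea (g : int -> K) (F : {set 'I_(Usz a b)} -> K) I :
  hyps A B ea -> stP A B I ->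
  \sum_(J | stP A B J) Xmx ea g I J * F J =
  \sum_(k in I :|: [set ea]) eps K I k * g (dec k) *
     (if stP A B (Jk I ea k) then F (Jk I ea k) else 0).
Proof.
move=> hh hI.
have step1 : forall J, stP A B J -> Xmx ea g I J =
    \sum_(k in I :|: [set ea]) (J == Jk I ea k)%:R * (eps K I k * g (dec k)).
  move=> J hJ; rewrite /Xmx; case: pickP => [k0 hk0 | hnone].
    have hk0in : k0 \in I :|: [set ea] by rewrite (eqP hk0) !inE eqxx orbT.
    rewrite (bigD1 k0) //= (Jk_cond hh hI hJ hk0in) hk0 mul1r big1 ?addr0 //.
    move=> k /andP[hk hne]; rewrite (Jk_cond hh hI hJ hk); case: eqP; last by rewrite mul0r.
    move=> he; exfalso; have hn := notin_shift hh hI hJ he.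
    have : k \in shift1 J :|: [set k0] by rewrite -(eqP hk0) he in_setU in_set1 eqxx orbT.
    by rewrite in_setU in_set1 (negbTE hn) (negbTE hne).
  rewrite big1 // => k hk; rewrite (Jk_cond hh hI hJ hk) hnone mul0r //.
rewrite (eq_bigr (fun J => (\sum_(k in I :|: [set ea]) (J == Jk I ea k)%:R *
    (eps K I k * g (dec k))) * F J)); last by move=> J hJ; rewrite step1.
rewrite (eq_bigr (fun J => \sum_(k in I :|: [set ea]) (J == Jk I ea k)%:R *
    (eps K I k * g (dec k)) * F J)); last by move=> J _; rewrite big_distrl.
rewrite exchange_big /=; apply: eq_bigr => k hk.
case hs: (stP A B (Jk I ea k)).
  rewrite (bigD1 (Jk I ea k)) //= eqxx mul1r big1 ?addr0 // => J /andP[_ hne].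
  by rewrite (negbTE hne) mul0r mul0r.
rewrite mulr0 big1 // => J hJ; case: eqP => [he|]; last by rewrite !mul0r.
by move: hJ; rewrite he hs.
Qed.

Definition inU a b (I : {set 'I_(Usz a b)}) (A : nat) (x : int) : bool :=
  (A%:Z <= x) || decS I x.

Definition Cm a b (I : {set 'I_(Usz a b)}) (A B m : nat) : seq int :=
  [seq x <- rngZ (- B%:Z) (m + B) | inU I A x].

Lemma Cm_uniq a b (I : {set 'I_(Usz a b)}) A B m : uniq (Cm I A B m).
Proof. by rewrite filter_uniq ?rngZ_uniq. Qed.

Lemma Cm_sorted a b (I : {set 'I_(Usz a b)}) A B m : sorted <%R (Cm I A B m).
Proof. apply: sorted_filter (rngZ_sorted _ _); exact: lt_trans. Qed.

Lemma mem_Cm a b (I : {set 'I_(Usz a b)}) A B m x :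
  (x \in Cm I A B m) = [&& inU I A x, - B%:Z <= x & x < m%:Z].
Proof. rewrite mem_filter mem_rngZ; case: (inU I A x) => /=; lia. Qed.

Lemma size_Cm_ge a b A B (I : {set 'I_(Usz a b)}) m :
  stP A B I -> (m <= size (Cm I A B m))%N.
Proof.
move=> hI.
set R := rngZ (- B%:Z) (m + B).
set L' := [seq x <- rngZ (- B%:Z) (A + B) | ~~ decS I x].
have hcI : #|I| = size [seq x <- rngZ (- B%:Z) (A + B) | decS I x].
  apply: card_dec; first by rewrite filter_uniq ?rngZ_uniq.
  move=> x; rewrite mem_filter mem_rngZ; case hd: (decS I x) => //=.
  have := stP_dec hI hd; lia.
have hL' : size L' = B.
  have := size_rngZ (- B%:Z) (A + B); rewrite -(count_predC (decS I)) -!size_filter.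
  case/andP: (hI) => /eqP; rewrite hcI => -> _ /addnI; exact.
have hsub : (size [seq x <- R | ~~ inU I A x] <= size L')%N.
  apply: uniq_leq_size; first by rewrite filter_uniq ?rngZ_uniq.
  move=> x; rewrite !mem_filter !mem_rngZ /inU negb_or => /andP[/andP[h1 h2] h3].
  rewrite h2 /=; lia.
have := size_rngZ (- B%:Z) (m + B); rewrite -(count_predC (inU I A)) -!size_filter.
rewrite -/R; move: hsub; rewrite hL' /Cm -/R /predC /=. move=> h1 h2; have h3 : size [seq x <- R | [pred x | ~~ inU I A x] x] = size [seq x <- R | ~~ inU I A x] by []. rewrite h3 in h2. rewrite -(leq_add2r (size [seq x <- R | ~~ inU I A x])) h2 leq_add2l; exact: h1.
Qed.

Lemma count_lt_nth (s : seq int) j : sorted <%R s -> (j < size s)%N ->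
  count (fun x => x < nth 0 s j) s = j.
Proof.
elim: s j => [|x s IH] j //= hs hj.
have hall : all (fun y => x < y) s.
  by move: hs; rewrite (path_sortedE (@lt_trans _ _)) => /andP[].
have hs' : sorted <%R s by move: hs; rewrite (path_sortedE (@lt_trans _ _)) => /andP[].
case: j hj => [|j] hj /=.
  rewrite ltxx add0n; apply/eqP; rewrite -leqn0 leqNgt -has_count; apply/hasPn => y hy.
  by move/allP: hall => /(_ y hy); rewrite -leNgt => /ltW.
rewrite IH //; move/allP: hall => /(_ (nth 0 s j)) -> //; exact: mem_nth.
Qed.

Lemma filter_neq_mid (s1 s2 : seq int) x : uniq (s1 ++ x :: s2) ->
  [seq y <- s1 ++ x :: s2 | y != x] = s1 ++ s2.
Proof.
rewrite cat_uniq /= => /and3P[_ hn /andP[hx _]].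
have hx1 : x \notin s1 by apply: contra hn => h; by rewrite /= h.
rewrite filter_cat /= eqxx /=; congr (_ ++ _); apply/all_filterP/allP => y hy.
  by apply: contraNneq hx1 => <-.
by apply: contraNneq hx => <-.
Qed.

Lemma rem_at_filter (s : seq int) j : uniq s -> (j < size s)%N ->
  rem_at j s = [seq y <- s | y != nth 0 s j].
Proof.
move=> hu hj; set x := nth 0 s j.
have e : s = take j s ++ x :: drop j.+1 s by rewrite -drop_nth // cat_take_drop.
by rewrite /rem_at [in RHS]e filter_neq_mid // -e.
Qed.

Lemma dec_le_A a b A B (ea : 'I_(Usz a b)) (I : {set 'I_(Usz a b)}) k :
  hyps A B ea -> stP A B I -> k \in I :|: [set ea] -> - B%:Z <= dec k <= A%:Z.
Proof. move=> hh hI hk; apply: (decS_Uea hh hI); apply/decSP; exists k => //. Qed.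

Lemma inU_Jk a b A B (ea : 'I_(Usz a b)) (I : {set 'I_(Usz a b)}) k y :
  hyps A B ea -> stP A B I -> k \in I :|: [set ea] ->
  inU (Jk I ea k) A y = ((y + 1) != dec k) && inU I A (y + 1).
Proof.
move=> hh hI hk; have hc := dec_le_A hh hI hk.
rewrite /inU /Jk decS_unshift; last first.
  by move=> x; rewrite inE => /andP[_]; exact: pos_Uea hh hI.
rewrite decS_D1 decS_U1; case: hh => hA hB hB1 ->.
case: (decS I (y + 1)); lia.
Qed.

Lemma Lcm a b A B (ea : 'I_(Usz a b)) (I : {set 'I_(Usz a b)}) k m :
  hyps A B ea -> stP A B I -> k \in I :|: [set ea] -> stP A B (Jk I ea k) ->
  Cm (Jk I ea k) A B m = map (fun x => x - 1) [seq x <- Cm I A B m.+1 | x != dec k].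
Proof.
move=> hh hI hk hJ.
rewrite /Cm -filter_predI map_filter_sh map_rngZ addSn rngZS /= addrK.
have -> : ((- B%:Z != dec k) && inU I A (- B%:Z)) = false.
  move: hJ; rewrite (stP_Jk hh hI hk) decS_D1 decS_U1 /= /inU.
  case: hh => hA hB hB1 hea; rewrite hea.
  case: (decS I (- B%:Z)); lia.
apply: eq_filter => y /=.
by rewrite (inU_Jk _ hh hI hk) opprK.
Qed.

Lemma G_ext (K : fieldType) (h1 h2 : nat -> int -> K) m s :
  (forall i x, h1 i x = h2 i x) -> G h1 m s = G h2 m s.
Proof.
move=> e; rewrite /G; case: eqP => // _; congr (\det _); apply/matrixP => i j.
by rewrite !mxE e.
Qed.

Lemma decS_ltk a b (I : {set 'I_(Usz a b)}) (k : 'I_(Usz a b)) x :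
  decS [set i in I | (i < k)%N] x = decS I x && (x < dec k).
Proof.
apply/decSP/andP.
  case=> i; rewrite inE => /andP[hi hik] <-; split; first by apply/decSP; exists i.
  by rewrite dec_ltE.
case=> /decSP[i hi <-] hlt; exists i => //; rewrite inE hi /= -dec_ltE //.
Qed.

Lemma eps_count (K : fieldType) a b A B (ea : 'I_(Usz a b)) (I : {set 'I_(Usz a b)}) k m :
  hyps A B ea -> stP A B I -> k \in I :|: [set ea] -> dec k <= m%:Z ->
  eps K I k = (-1) ^+ (count (fun x => x < dec k) (Cm I A B m.+1)).
Proof.
move=> hh hI hk hkm; have hc := dec_le_A hh hI hk.
rewrite /eps; congr (_ ^+ _); rewrite -size_filter; apply: card_dec.
  by rewrite filter_uniq ?Cm_uniq.
move=> x; rewrite mem_filter mem_Cm decS_ltk /inU.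
case hd: (decS I x) => /=.
  have := stP_dec hI hd; lia.
lia.
Qed.

Lemma size_filter_neq (s : seq int) c : uniq s ->
  ((size s).-1 <= size [seq x <- s | x != c])%N.
Proof.
move=> hu; rewrite size_filter.
have := count_predC (pred1 c) s; rewrite count_uniq_mem //.
have -> : count (predC (pred1 c)) s = count (fun x => x != c) s by apply: eq_count.
case: (c \in s) => /=; lia.
Qed.

Lemma step (K : fieldType) a b A B (ea : 'I_(Usz a b)) (g : int -> K)
  (h h' : nat -> int -> K) (lam : K) (F : {set 'I_(Usz a b)} -> K) m I :
  hyps A B ea -> stP A B I ->
  (forall s, A%:Z < s -> g s = 0) ->
  (forall s, h 0%N s = lam * g s) ->
  (forall i s, h i.+1 s = h' i s) ->
  (forall i, h' i (- B%:Z - 1 - i%:Z) = 0) ->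
  (forall J, stP A B J -> F J = G h' m (Cm J A B m)) ->
  G h m.+1 (Cm I A B m.+1) = lam * \sum_(J | stP A B J) Xmx ea g I J * F J.
Proof.
move=> hh hI hg h0 hS hz hF.
rewrite (Xmx_sum _ _ hh hI).
set C := Cm I A B m.+1.
pose GG c := G h' m (map (fun x => x - 1) [seq x <- C | x != c]).
have hterm : forall k, k \in I :|: [set ea] ->
   (if stP A B (Jk I ea k) then F (Jk I ea k) else 0) = GG (dec k).
  move=> k hk; case hs: (stP A B (Jk I ea k)).
    by rewrite hF // (Lcm _ hh hI hk hs).
  rewrite /GG /=; apply/esym/(@G_zero_col _ _ _ _ (- B%:Z - 1)) => //.
  have : - B%:Z \in [seq x <- C | x != dec k].
    move: hs; rewrite (stP_Jk hh hI hk) => /negbFE; rewrite decS_D1 decS_U1 => /andP[/orP[hd|he] hne].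
      by rewrite mem_filter hne mem_Cm /inU hd orbT /=; lia.
    exfalso; move: he; case: hh => hA hB hB1 ->; lia.
  by move=> hin; apply/mapP; exists (- B%:Z).
rewrite (eq_bigr (fun k => eps K I k * g (dec k) * GG (dec k))); last first.
  by move=> k hk; rewrite hterm.
have hCge := size_Cm_ge m.+1 hI; rewrite -/C in hCge.
case: (eqVneq (size C) m.+1) => hsz; last first.
  rewrite {1}/G (negbTE hsz) big1 ?mulr0 // => k hk.
  rewrite /GG /G size_map; have := size_filter_neq (dec k) (Cm_uniq I A B m.+1).
  rewrite -/C; case: eqP => [he|]; last by rewrite mulr0.
  move: hsz hCge; rewrite he; lia.
pose T' c := (-1) ^+ (count (fun x => x < c) C) * h 0%N c * GG c.
rewrite G_lap //.
have e1 : forall j : 'I_m.+1, (-1) ^+ j * h 0%N (nth 0 C j) *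
    G (fun i => h i.+1) m [seq x - 1 | x <- rem_at j C] = T' (nth 0 C j).
  move=> j; rewrite /T' /GG count_lt_nth ?Cm_sorted ?hsz //.
  by rewrite (G_ext _ _ hS) rem_at_filter ?Cm_uniq ?hsz.
rewrite (eq_bigr _ (fun j _ => e1 j)).
have -> : \sum_(i < m.+1) T' (nth 0 C i) = \sum_(c <- C) T' c by rewrite [RHS](big_nth 0) hsz big_mkord.
rewrite (bigID (fun c => c <= A%:Z)) /= [X in _ + X]big1 ?addr0; last first.
  move=> c; rewrite -ltNge => hc; rewrite /T' h0 hg // mulr0 mulr0 mul0r //.
rewrite (bigID (fun k => dec k <= m%:Z)) /= [X in _ + X]big1 ?addr0; last first.
  move=> k /andP[hk]; rewrite -ltNge => hkm.
  rewrite /GG /G size_map.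
  have -> : [seq x <- C | x != dec k] = C.
    apply/all_filterP/allP => x; rewrite mem_Cm => /and3P[_ _ hx]; lia.
  by rewrite hsz eqn_leq ltnn mulr0.
rewrite mulr_sumr.
rewrite (eq_bigr (fun k => T' (dec k))); last first.
  move=> k /andP[hk hkm]; rewrite /T' (eps_count K hh hI hk hkm) h0; ring.
rewrite -big_enum_cond -(big_map (@dec a b) (fun c => c <= m%:Z) T').
rewrite -big_filter -[in RHS]big_filter; apply: perm_big.
apply: uniq_perm.
- by rewrite filter_uniq // Cm_uniq.
- apply: filter_uniq; rewrite map_inj_uniq. apply: enum_uniq. move=> x y hxy; apply: val_inj; move: hxy; rewrite !decE /=; lia.
move=> c; rewrite !mem_filter mem_rngZ /inU.
have -> : (c \in map (@dec a b) (enum (I :|: [set ea]))) = decS (I :|: [set ea]) c.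
  apply/mapP/decSP.
    by case=> k; rewrite mem_enum => hk ->; exists k.
  by case=> k hk <-; exists k; rewrite ?mem_enum.
rewrite decS_U1; case: hh => hA hB hB1 ->.
case hd: (decS I c) => /=.
  have := stP_dec hI hd; lia.
lia.
Qed.

Lemma smul_sid_l (K : fieldType) a b (P : pred {set 'I_(Usz a b)}) (X : smx K a b) I J :
  P I -> smul P (@sid K a b) X I J = X I J.
Proof.
move=> hI; rewrite /smul (bigD1 I) //= /sid eqxx mul1r big1 ?addr0 //.
by move=> L /andP[_ hL]; rewrite eq_sym (negbTE hL) mul0r.
Qed.

Lemma smul_sid_r (K : fieldType) a b (P : pred {set 'I_(Usz a b)}) (X : smx K a b) I J :
  P J -> smul P X (@sid K a b) I J = X I J.
Proof.
move=> hJ; rewrite /smul (bigD1 J) //= /sid eqxx mulr1 big1 ?addr0 //.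
by move=> L /andP[_ hL]; rewrite (negbTE hL) mulr0.
Qed.

Lemma spowS (K : fieldType) a b (P : pred {set 'I_(Usz a b)}) (X : smx K a b) m :
  spow P X m.+1 = smul P (spow P X m) X.
Proof. by []. Qed.

Lemma spow_S (K : fieldType) a b (P : pred {set 'I_(Usz a b)}) (X : smx K a b) m I J :
  P I -> P J -> spow P X m.+1 I J = smul P X (spow P X m) I J.
Proof.
elim: m I J => [|m IH] I J hI hJ.
  by rewrite spowS smul_sid_l // smul_sid_r.
change (smul P (spow P X m.+1) X I J = smul P X (spow P X m.+1) I J).
rewrite {1}/smul.
rewrite (eq_bigr (fun L => \sum_(M | P M) X I M * spow P X m M L * X L J)); last first.
  by move=> L hL; rewrite IH // big_distrl.
rewrite exchange_big /smul /=; apply: eq_bigr => M hM.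
rewrite /smul big_distrr /=; apply: eq_bigr => L hL; by rewrite mulrA.
Qed.

Lemma assoc3 (K : fieldType) a b (P1 P2 : pred {set 'I_(Usz a b)}) (X Y W : smx K a b) l I J :
  P2 I ->
  smul P1 (smul P2 (spow P2 X l.+1) Y) W I J =
  \sum_(N | P2 N) X I N * smul P1 (smul P2 (spow P2 X l) Y) W N J.
Proof.
move=> hI; rewrite /smul.
rewrite (eq_bigr (fun L => \sum_(M | P2 M) \sum_(N | P2 N)
   X I N * spow P2 X l N M * Y M L * W L J)); last first.
  move=> L hL; rewrite big_distrl /=; apply: eq_bigr => M hM.
  by rewrite -(spowS P2 X l) spow_S // /smul !big_distrl.
rewrite [RHS](eq_bigr (fun N => \sum_(L | P1 L) \sum_(M | P2 M)
   X I N * spow P2 X l N M * Y M L * W L J)); last first.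
  move=> N hN; rewrite big_distrr /=; apply: eq_bigr => L hL.
  rewrite big_distrl big_distrr /=; apply: eq_bigr => M hM; ring.
rewrite exchange_big /=.
rewrite (eq_bigr (fun M => \sum_(N | P2 N) \sum_(L | P1 L)
   X I N * spow P2 X l N M * Y M L * W L J)); last first.
  by move=> M hM; rewrite exchange_big.
rewrite exchange_big /=; apply: eq_bigr => N hN; by rewrite exchange_big.
Qed.

Lemma dec_surj a b (x : int) : - (b + 2)%:Z <= x -> x <= a%:Z + 1 ->
  exists k : 'I_(Usz a b), dec k = x.
Proof.
move=> h1 h2.
have hlt : (absz (x + (b + 2)%:Z)%R < Usz a b)%N by rewrite /Usz; lia.
by exists (Ordinal hlt); rewrite decE /=; lia.
Qed.

Lemma beta_out (K : fieldType) a b (w : int -> K) s :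
  (forall s : int, (s < - b%:Z) || (a%:Z < s) -> w s = 0) ->
  (1 <= a)%N -> (1 <= b)%N -> (s < - b%:Z) || (a%:Z < s) -> beta w s = 0.
Proof.
move=> hwz ha hb hs; rewrite /beta hwz //.
have -> : (s == 0) = false by apply/negbTE; move: hs; lia.
by rewrite subr0.
Qed.

Lemma hyps_T a b : (1 <= b)%N -> hyps a b (enc_a a b).
Proof.
move=> hb; split; [lia|lia|lia|].
by rewrite decE /enc_a inordK /Usz; lia.
Qed.

Lemma hyps_Tt a b : (1 <= a)%N -> hyps a.-1 b.+1 (enc_a1 a b).
Proof.
move=> ha; split; [lia|lia|lia|].
by rewrite decE /enc_a1 inordK /Usz; lia.
Qed.

Lemma Ttidx_stP a b (I : {set 'I_(Usz a b)}) : (1 <= a)%N ->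
  Ttidx I = stP a.-1 b.+1 I.
Proof.
move=> ha; rewrite /Ttidx /stP; congr (_ && within _ _ _); lia.
Qed.

Lemma decS_I0 a b x : decS (I0 a b) x = (0 <= x) && (x <= a%:Z - 1).
Proof.
apply/decSP/idP.
  by case=> k; rewrite inE => hk <-.
move=> hx; have [k hk] : exists k : 'I_(Usz a b), dec k = x by apply: dec_surj; lia.
by exists k; rewrite // inE hk.
Qed.

Lemma decS_It0 a b x : decS (It0 a b) x = (0 <= x) && (x <= a%:Z - 2).
Proof.
apply/decSP/idP.
  by case=> k; rewrite inE => hk <-.
move=> hx; have [k hk] : exists k : 'I_(Usz a b), dec k = x by apply: dec_surj; lia.
by exists k; rewrite // inE hk.
Qed.

Lemma stP_I0 a b : stP a b (I0 a b).
Proof.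
rewrite /stP; apply/andP; split.
  rewrite (@card_dec _ _ _ (rngZ 0 a)) ?size_rngZ ?rngZ_uniq // => x.
  rewrite mem_rngZ decS_I0; lia.
apply/withinP => y; rewrite decS_I0; lia.
Qed.

Lemma stP_It0 a b : (1 <= a)%N -> stP a.-1 b.+1 (It0 a b).
Proof.
move=> ha; rewrite /stP; apply/andP; split.
  rewrite (@card_dec _ _ _ (rngZ 0 a.-1)) ?size_rngZ ?rngZ_uniq // => x.
  rewrite mem_rngZ decS_It0; lia.
apply/withinP => y; rewrite decS_It0; lia.
Qed.

Lemma base_eq a b (I : {set 'I_(Usz a b)}) :
  stP a b I -> (I == I0 a b) = ~~ has (inU I a) (rngZ (- b%:Z) b).
Proof.
move=> hI; apply/eqP/idP.
  move=> ->; apply/hasPn => x; rewrite mem_rngZ /inU decS_I0; lia.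
move=> hn; apply/eqP; rewrite eqEcard.
case/andP: (hI) => /eqP -> _; case/andP: (stP_I0 a b) => /eqP -> _; rewrite leqnn andbT.
apply/subsetP => k hk; rewrite inE.
have hd : decS I (dec k) by apply/decSP; exists k.
have := stP_dec hI hd => hr.
case: (ltP (dec k) 0) => hneg; last by lia.
exfalso; move/hasPn: hn => /(_ (dec k)); rewrite mem_rngZ /inU hd orbT; lia.
Qed.

Lemma TA (K : fieldType) a b (w : int -> K) m (I : {set 'I_(Usz a b)}) :
  (1 <= a)%N -> (1 <= b)%N ->
  (forall s : int, (s < - b%:Z) || (a%:Z < s) -> w s = 0) ->
  stP a b I ->
  spow (@Tidx a b) (@Tmx K a b w) m I (I0 a b) =
  G (fun (_ : nat) s => beta w s) m (Cm I a b m).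
Proof.
move=> ha hb hwz; elim: m I => [|m IH] I hI.
  rewrite /spow /= /sid /G det_mx00 (base_eq hI) size_filter has_count.
  by case: (count _ _).
rewrite (@spow_S K a b (@Tidx a b) (@Tmx K a b w) m I (I0 a b) hI (stP_I0 a b)); symmetry.
rewrite (@step K a b a b (enc_a a b) (beta w) (fun _ s => beta w s) (fun _ s => beta w s)
   1 (fun J => spow (@Tidx a b) (@Tmx K a b w) m J (I0 a b)) m I (hyps_T a hb) hI).
- by rewrite mul1r.
- move=> s hs; apply: (beta_out hwz ha hb); lia.
- by move=> s; rewrite mul1r.
- by [].
- move=> i; apply: (beta_out hwz ha hb); lia.
- by move=> J hJ; rewrite IH.
Qed.

Definition Qv (K : fieldType) a b (w : int -> K) l m (I : {set 'I_(Usz a b)}) : K :=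
  smul (@Tidx a b) (smul (@Ttidx a b) (spow (@Ttidx a b) (@Ttmx K a b w) l) (@Umx K a b))
       (spow (@Tidx a b) (@Tmx K a b w) m) I (I0 a b).

Definition hl (K : fieldType) (w : int -> K) (l : nat) (i : nat) (s : int) : K :=
  if (i < l)%N then beta w (s + 1) else beta w s.

Lemma Tidx_U1 a b (I : {set 'I_(Usz a b)}) : (1 <= a)%N -> (1 <= b)%N ->
  stP a.-1 b.+1 I -> stP a b (I :|: [set enc_a1 a b]) = ~~ decS I (- (b.+1)%:Z).
Proof.
move=> ha hb hI; have hh := hyps_Tt b ha.
rewrite /stP (card_Uea hh hI) prednK // eqxx /=.
have hd1 : dec (enc_a1 a b) = a%:Z - 1 by case: hh => _ _ _ ->; lia.
apply/withinP/idP.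
  move=> hw; apply/negP => hd; have := hw (- (b.+1)%:Z).
  by rewrite decS_U1 hd /= => /(_ isT); lia.
move=> hn y; rewrite decS_U1 hd1 => /orP[hd|/eqP ->]; last by lia.
have := stP_dec hI hd; have : y != - (b.+1)%:Z by apply: contraNneq hn => <-.
lia.
Qed.

Lemma Cm_base a b (I : {set 'I_(Usz a b)}) m : (1 <= a)%N ->
  ~~ decS I (- (b.+1)%:Z) ->
  Cm I a.-1 b.+1 m = Cm (I :|: [set enc_a1 a b]) a b m.
Proof.
move=> ha hn.
have hd1 : dec (enc_a1 a b) = a%:Z - 1 by case: (hyps_Tt b ha) => _ _ _ ->; lia.
rewrite /Cm addnS rngZS /= {1}/inU (negbTE hn) orbF.
have -> : (a.-1%:Z <= - (b.+1)%:Z) = false by lia.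
have -> : - (b.+1)%:Z + 1 = - b%:Z by lia.
apply: eq_filter => x; rewrite /inU decS_U1 hd1.
case: (decS I x); lia.
Qed.

Lemma QB (K : fieldType) a b (w : int -> K) l m (I : {set 'I_(Usz a b)}) :
  (1 <= a)%N -> (1 <= b)%N ->
  (forall s : int, (s < - b%:Z) || (a%:Z < s) -> w s = 0) ->
  stP a.-1 b.+1 I ->
  Qv w l m I = (-1) ^+ l * G (hl w l) (l + m) (Cm I a.-1 b.+1 (l + m)).
Proof.
move=> ha hb hwz; elim: l I => [|l IH] I hI.
  rewrite expr0 mul1r add0n /Qv {1}/smul.
  rewrite (eq_bigr (fun L => ((I :|: [set enc_a1 a b]) == L)%:R *
       spow (@Tidx a b) (@Tmx K a b w) m L (I0 a b))); last first.
    by move=> L hL; rewrite smul_sid_l ?Ttidx_stP.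
  rewrite (G_ext _ _ (h2 := fun _ s => beta w s)); last by [].
  case hT: (stP a b (I :|: [set enc_a1 a b])).
    rewrite (bigD1 (I :|: [set enc_a1 a b])) //= eqxx mul1r big1 ?addr0; last first.
      by move=> L /andP[_ hL]; rewrite eq_sym (negbTE hL) mul0r.
    rewrite TA // Cm_base //; by rewrite -(Tidx_U1 ha hb hI).
  rewrite big1; last first.
    move=> L hL; case: eqP => [he|]; last by rewrite mul0r.
    by move: hL; rewrite -he /Tidx -/(stP a b _) hT.
  move: hT; rewrite (Tidx_U1 ha hb hI) => /negbFE hd.
  apply/esym/(@G_zero_col _ _ _ _ (- (b.+1)%:Z)).
    rewrite mem_Cm /inU hd orbT /=; lia.
  move=> i; apply: (beta_out hwz ha hb); lia.
rewrite /Qv assoc3 ?Ttidx_stP //.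
rewrite (eq_bigr (fun N => @Ttmx K a b w I N * ((-1) ^+ l *
     G (hl w l) (l + m) (Cm N a.-1 b.+1 (l + m))))); last first.
  by move=> N hN; rewrite -IH // -Ttidx_stP.
rewrite (eq_bigl (fun N => stP a.-1 b.+1 N)); last by move=> N; rewrite Ttidx_stP.
rewrite (eq_bigr (fun N => (-1) ^+ l * (@Ttmx K a b w I N *
     G (hl w l) (l + m) (Cm N a.-1 b.+1 (l + m))))); last by move=> N _; ring.
rewrite -mulr_sumr addSn.
rewrite (@step K a b a.-1 b.+1 (enc_a1 a b) (betat w) (hl w l.+1) (hl w l)
   (-1) (fun J => G (hl w l) (l + m) (Cm J a.-1 b.+1 (l + m))) (l + m) I (hyps_Tt b ha) hI).
- by rewrite exprS; ring.
- move=> s hs; rewrite /betat (beta_out hwz ha hb) ?oppr0 //; lia.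
- by move=> s; rewrite /hl /betat /=; ring.
- by move=> i s; rewrite /hl.
- move=> i; rewrite /hl; case: ifP => _; apply: (beta_out hwz ha hb); lia.
- by [].
Qed.

Lemma Cm_It0 a b k : (1 <= a)%N -> Cm (It0 a b) a.-1 b.+1 k = rngZ 0 k.
Proof.
move=> ha; apply: lt_sorted_eq; [exact: Cm_sorted | exact: rngZ_sorted |].
move=> x; rewrite mem_Cm mem_rngZ /inU decS_It0; lia.
Qed.

Lemma lift_val n (h : 'I_n.+1) (i : 'I_n) :
  (lift h i : nat) = if (i < h)%N then (i : nat) else i.+1.
Proof. rewrite /= /bump; case: ltnP => hi; lia. Qed.

Lemma part1 (K : fieldType) a b (w : int -> K) k l :
  (1 <= a)%N -> (1 <= b)%N ->
  (forall s : int, (s < - b%:Z) || (a%:Z < s) -> w s = 0) -> (l <= k)%N ->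
  Fkl w k l = Qv w l (k - l) (It0 a b).
Proof.
move=> ha hb hwz hlk.
rewrite QB ?stP_It0 // subnKC // Cm_It0 // /G size_rngZ eqxx.
rewrite /Fkl /cofactor inordK ?ltnS // addn0; congr (_ * \det _).
apply/matrixP => i j; rewrite !mxE (nth_map 0%N) ?size_iota // nth_iota // add0n.
rewrite -val_eqE /= inordK ?ltnS // /bump /hl /beta.
case: ltnP => hil; congr (_%:R - w _); lia.
Qed.

Lemma part2 (K : fieldType) (w : int -> K) k : Fkl w k 0 = Fk w k.
Proof.
case: k => [|k].
  by rewrite /Fkl /Fk /cofactor det_mx00 mulr1 inordK.
rewrite /Fkl /Fk /cofactor inordK // addn0 expr0 mul1r; congr (\det _).
apply/matrixP => i j; rewrite !mxE -val_eqE /= inordK // /bump.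
congr (_%:R - w _); lia.
Qed.

Theorem mainTheorem8 (K : fieldType) (hK : [pchar K] =i pred0)
  (S : seq int) (a b : nat) (w : int -> K)
  (ha : (1 <= a)%N) (hb : (1 <= b)%N)
  (hamax : a%:Z \in S) (hbmin : - b%:Z \in S)
  (hS : forall s, s \in S -> - b%:Z <= s <= a%:Z)
  (hw : forall s, s \notin S -> w s = 0) :
  (forall k l : nat, (l <= k)%N ->
     Fkl w k l =
     @smul K a b (@Tidx a b)
       (@smul K a b (@Ttidx a b)
          (@spow K a b (@Ttidx a b) (@Ttmx K a b w) l) (@Umx K a b))
       (@spow K a b (@Tidx a b) (@Tmx K a b w) (k - l)) (It0 a b) (I0 a b))
  /\ (forall k : nat, Fkl w k 0 = Fk w k).
Proof.
have hwz : forall s : int, (s < - b%:Z) || (a%:Z < s) -> w s = 0.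
  move=> s hs; apply: hw; apply/negP => /hS; lia.
split; last by move=> k; exact: part2.
move=> k l hlk; exact: part1 ha hb hwz hlk.
Qed.
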